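(* Let $q_1,q_2,q_3\in(0,1)$ with $q_1+q_2+q_3=1$. On $\mathbb{C}^3$ with basis $\{|0\rangle,|1\rangle,|2\rangle\}$ define the unitaries $L_1=|0\rangle\langle0|+|1\rangle\langle1|+|2\rangle\langle2|$, $L_2=|1\rangle\langle0|+|2\rangle\langle1|+|0\rangle\langle2|$, $L_3=-|0\rangle\langle0|+|1\rangle\langle1|+|2\rangle\langle2|$, $S_1=|2\rangle\langle0|+|0\rangle\langle1|+|1\rangle\langle2|$, $S_2=-|1\rangle\langle0|+|2\rangle\langle1|+|0\rangle\langle2|$, $S_3=-|2\rangle\langle0|+|0\rangle\langle1|+|1\rangle\langle2|$, and the noisy unitary channels $\mathcal{L}(\rho)=\sum_{k=1}^3 q_kL_k\rho L_k^\dagger$ and $\mathcal{S}(\rho)=\sum_{k=1}^3 q_kS_k\rho S_k^\dagger$. Then the optimal probe for discriminating $\mathcal{L}$ and $\mathcal{S}$ is a non-maximally entangled state: the maximum of the success probability over all probes is attained by a non-maximally entangled pure state of $\mathbb{C}^3\otimes\mathbb{C}^3$.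
   Context: For two channels chosen with equal priors $1/2$, the single-shot success probability with a single-system probe $\rho$ is $\frac12+\frac14\|\mathcal{N}_1(\rho)-\mathcal{N}_2(\rho)\|_1$, and with a bipartite probe $\rho_{AB}$ on $\mathbb{C}^3\otimes\mathbb{C}^{d'}$ (channel acting on $A$) it is $\frac12+\frac14\|(\mathcal{N}_1\otimes\mathrm{id})(\rho_{AB})-(\mathcal{N}_2\otimes\mathrm{id})(\rho_{AB})\|_1$; $\|\cdot\|_1$ is the trace norm. The optimal probe maximizes this over all single-system and bipartite probes. A pure state on $\mathbb{C}^3\otimes\mathbb{C}^3$ is maximally entangled if its reduced states are $\mathbb{I}_3/3$; non-maximally entangled means entangled but not maximally entangled. *)

(* Defs.v *)
From HB Require Import structures.
From mathcomp Require Import all_boot all_order all_algebra.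
From mathcomp Require Import classical_sets reals.
From mathcomp Require Import complex mxtens.
Set Implicit Arguments. Unset Strict Implicit. Unset Printing Implicit Defensive.
Import Order.TTheory GRing.Theory Num.Theory.
Local Open Scope ring_scope.
Local Open Scope complex_scope.

Section Quantum.
Variable R : realType.
Local Notation C := R[i].

Definition adj {m n} (A : 'M[C]_(m, n)) : 'M[C]_(n, m) := (map_mx Num.conj A)^T.

(* positive semidefinite: <v|A|v> >= 0 for all v (in the order of C, 0 <= z
   means z is real and nonnegative) *)
Definition psd {n} (A : 'M[C]_n) : Prop :=
  forall v : 'cV[C]_n, 0 <= (adj v *m A *m v) 0 0.

Definition density {n} (rho : 'M[C]_n) : Prop := psd rho /\ \tr rho = 1.

(* trace norm ||X||_1 = tr sqrt(X^dagger X), sqrt = the (unique) PSD square root *)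
Definition trnorm {m n} (X : 'M[C]_(m, n)) : C :=
  \tr (xget 0 [set S : 'M[C]_n | psd S /\ S *m S = adj X *m X]).

Definition ketbra (i j : 'I_3) : 'M[C]_3 := delta_mx i j.
Definition k0 : 'I_3 := @Ordinal 3 0 isT.
Definition k1 : 'I_3 := @Ordinal 3 1 isT.
Definition k2 : 'I_3 := @Ordinal 3 2 isT.

Definition chan (q : 'I_3 -> R) (K : 'I_3 -> 'M[C]_3) (rho : 'M[C]_3) : 'M[C]_3 :=
  \sum_(k < 3) (q k)%:C *: (K k *m rho *m adj (K k)).

Definition chanA (d : nat) (q : 'I_3 -> R) (K : 'I_3 -> 'M[C]_3)
    (rho : 'M[C]_(3 * d)) : 'M[C]_(3 * d) :=
  \sum_(k < 3) (q k)%:C *: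
     ((K k *t (1%:M : 'M[C]_d)) *m rho *m adj (K k *t (1%:M : 'M[C]_d))).

(* success probabilities, equal priors *)
Definition psucc1 q (K1 K2 : 'I_3 -> 'M[C]_3) (rho : 'M[C]_3) : C :=
  1 / 2 + 1 / 4 * trnorm (chan q K1 rho - chan q K2 rho).
Definition psucc2 d q (K1 K2 : 'I_3 -> 'M[C]_3) (rho : 'M[C]_(3 * d)) : C :=
  1 / 2 + 1 / 4 * trnorm (chanA q K1 rho - chanA q K2 rho).

Definition proj {n} (psi : 'cV[C]_n) : 'M[C]_n := psi *m adj psi.
Definition unit_vec {n} (psi : 'cV[C]_n) : Prop := (adj psi *m psi) 0 0 = 1.

Definition ptrB {m n} (rho : 'M[C]_(m * n)) : 'M[C]_m :=
  \matrix_(i, j) \sum_(k < n) rho (mxtens_index (i, k)) (mxtens_index (j, k)).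
Definition ptrA {m n} (rho : 'M[C]_(m * n)) : 'M[C]_n :=
  \matrix_(i, j) \sum_(k < m) rho (mxtens_index (k, i)) (mxtens_index (k, j)).

Definition entangled_pure (psi : 'cV[C]_(3 * 3)) : Prop :=
  ~ exists (a b : 'cV[C]_3), psi = a *t b.
Definition max_entangled (psi : 'cV[C]_(3 * 3)) : Prop :=
  ptrB (proj psi) = 3%:R^-1 *: 1%:M /\ ptrA (proj psi) = 3%:R^-1 *: 1%:M.

Definition Lop (k : 'I_3) : 'M[C]_3 :=
  match val k with
  | 0 => ketbra k0 k0 + ketbra k1 k1 + ketbra k2 k2
  | 1 => ketbra k1 k0 + ketbra k2 k1 + ketbra k0 k2
  | _ => - ketbra k0 k0 + ketbra k1 k1 + ketbra k2 k2
  end.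
Definition Sop (k : 'I_3) : 'M[C]_3 :=
  match val k with
  | 0 => ketbra k2 k0 + ketbra k0 k1 + ketbra k1 k2
  | 1 => - ketbra k1 k0 + ketbra k2 k1 + ketbra k0 k2
  | _ => - ketbra k2 k0 + ketbra k0 k1 + ketbra k1 k2
  end.

Definition qvec (q1 q2 q3 : R) (k : 'I_3) : R :=
  match val k with 0 => q1 | 1 => q2 | _ => q3 end.

End Quantum.

(* Main.v *)
Require Import Defs.
From HB Require Import structures.
From mathcomp Require Import all_boot all_order all_algebra.
From mathcomp Require Import classical_sets reals.
From mathcomp Require Import complex mxtens.
From mathcomp Require Import ring lra.
Import Order.TTheory GRing.Theory Num.Theory.
Local Open Scope ring_scope.
Set Implicit Arguments. Unset Strict Implicit. Unset Printing Implicit Defensive.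

Section Gen.
Variable R : realType.
Local Notation C := R[i].

Lemma adjE m n (A : 'M[C]_(m,n)) i j : adj A i j = (A j i)^*.
Proof. by rewrite !mxE. Qed.

Lemma adjK m n (A : 'M[C]_(m,n)) : adj (adj A) = A.
Proof. by apply/matrixP=> i j; rewrite !adjE conjCK. Qed.

Lemma adj_mul m n p (A : 'M[C]_(m,n)) (B : 'M[C]_(n,p)) :
  adj (A *m B) = adj B *m adj A.
Proof. by rewrite /adj map_mxM trmx_mul. Qed.

Lemma adjD m n (A B : 'M[C]_(m,n)) : adj (A + B) = adj A + adj B.
Proof. by apply/matrixP=> i j; rewrite !mxE rmorphD. Qed.

Lemma adjN m n (A : 'M[C]_(m,n)) : adj (- A) = - adj A.
Proof. by apply/matrixP=> i j; rewrite !mxE rmorphN. Qed.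

Lemma adjB m n (A B : 'M[C]_(m,n)) : adj (A - B) = adj A - adj B.
Proof. by rewrite adjD adjN. Qed.

Lemma adjZ m n c (A : 'M[C]_(m,n)) : adj (c *: A) = c^* *: adj A.
Proof. by apply/matrixP=> i j; rewrite !mxE rmorphM. Qed.

Lemma adj_sum m n I (r : seq I) (P : pred I) (F : I -> 'M[C]_(m,n)) :
  adj (\sum_(k <- r | P k) F k) = \sum_(k <- r | P k) adj (F k).
Proof.
elim/big_rec2: _ => [|k y1 y2 _ <-]; last by rewrite adjD.
by apply/matrixP=> i j; rewrite !mxE rmorph0.
Qed.

Lemma adj1 n : adj (1%:M : 'M[C]_n) = 1%:M.
Proof. by apply/matrixP=> i j; rewrite !mxE eq_sym rmorph_nat. Qed.

Lemma adj_tens m n p q (A : 'M[C]_(m,n)) (B : 'M[C]_(p,q)) :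
  adj (A *t B) = adj A *t adj B.
Proof. by rewrite /adj map_mxT trmx_tens. Qed.

Lemma tens11 m n : (1%:M : 'M[C]_m) *t (1%:M : 'M[C]_n) = 1%:M.
Proof.
apply/matrixP=> i j.
case: (mxtens_indexP i)=> i0 i1; case: (mxtens_indexP j)=> j0 j1.
rewrite tensmxE !mxE -natrM mulnb.
by rewrite (inj_eq (can_inj (@mxtens_indexK _ _))) xpair_eqE.
Qed.

Lemma quadE n (M : 'M[C]_n) i j :
  (adj (delta_mx i 0 : 'cV[C]_n) *m M *m (delta_mx j 0 : 'cV[C]_n)) 0 0 = M i j.
Proof.
have -> : adj (delta_mx i 0 : 'cV[C]_n) = (delta_mx 0 i : 'rV[C]_n).
  by apply/matrixP=> a b; rewrite !mxE rmorph_nat andbC.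
by rewrite -rowE -colE !mxE.
Qed.

Lemma psd_diag n (M : 'M[C]_n) i : psd M -> 0 <= M i i.
Proof. by move=> /(_ (delta_mx i 0)); rewrite quadE. Qed.

Lemma quadE1 n (M : 'M[C]_n) i j :
  adj (delta_mx i 0 : 'cV[C]_n) *m M *m (delta_mx j 0 : 'cV[C]_n) = (M i j)%:M.
Proof. by apply/matrixP=> a b; rewrite [a]ord1 [b]ord1 quadE mxE eqxx mulr1n. Qed.

Lemma quad2 n (M : 'M[C]_n) i j c :
  let v : 'cV[C]_n := delta_mx i 0 + c *: delta_mx j 0 in
  (adj v *m M *m v) 0 0 = M i i + c * M i j + c^* * M j i + c^* * c * M j j.
Proof.
rewrite /= adjD adjZ !mulmxDl !mulmxDr -!scalemxAl -!scalemxAr !quadE1 !mxE eqxx !mulr1n.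
by ring.
Qed.

Lemma psd_herm n (M : 'M[C]_n) : psd M -> forall i j, M j i = (M i j)^*.
Proof.
move=> pM i j.
have r c : (M i i + c * M i j + c^* * M j i + c^* * c * M j j) \is Num.real.
  by rewrite -quad2 ger0_real.
have rii : M i i \is Num.real by rewrite ger0_real // psd_diag.
have rjj : M j j \is Num.real by rewrite ger0_real // psd_diag.
have h1 := r 1; have h2 := r 'i.
rewrite rmorph1 !mul1r in h1.
move: h1 h2 => /CrealP h1 /CrealP h2.
move: rii rjj => /CrealP rii /CrealP rjj.
rewrite !rmorphD !rmorphM /= ?conjCK rii rjj in h1 h2.
set a := M i j in h1 h2 *; set b := M j i in h1 h2 *.
set x := a^* in h1 h2 *; set y := b^* in h1 h2 *.
have e1 : x + y - (a + b) = 0.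
  have -> : x + y - (a + b) = (M i i + x + y + M j j) - (M i i + a + b + M j j) by ring.
  by rewrite h1 subrr.
have e2 : 'i * (y - x - (a - b)) = 0.
  have -> : 'i * (y - x - (a - b)) = (M i i + 'i^* * x + 'i * y + 'i * 'i^* * M j j) -
      (M i i + 'i * a + 'i^* * b + 'i^* * 'i * M j j).
    by rewrite (@conjCi C); ring.
  by rewrite h2 subrr.
move: e2 => /eqP; rewrite mulf_eq0 (negbTE (@neq0Ci _)) /= => /eqP e2.
have : 2%:R * (b - x) = 0.
  have -> : 2%:R * (b - x) = (y - x - (a - b)) - (x + y - (a + b)) by ring.
  by rewrite e1 e2 subrr.
move/eqP; rewrite mulf_eq0 pnatr_eq0 /= subr_eq0 => /eqP.
done.
Qed.

Lemma psd_hermE n (M : 'M[C]_n) : psd M -> adj M = M.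
Proof. move=> pM; apply/matrixP=> i j; rewrite adjE (psd_herm pM) conjCK; reflexivity. Qed.

Lemma adj_tc m n (A : 'M[C]_(m,n)) : adj A = map_mx Num.conj (A^T).
Proof. by rewrite /adj map_trmx. Qed.

Lemma psd_conj m n (K : 'M[C]_(m,n)) (M : 'M[C]_n) : psd M -> psd (K *m M *m adj K).
Proof.
move=> pM v; have := pM (adj K *m v).
by rewrite adj_mul adjK !mulmxA.
Qed.

Lemma psd0 n : psd (0 : 'M[C]_n).
Proof. by move=> v; rewrite mulmx0 mul0mx mxE. Qed.

Lemma psdD n (A B : 'M[C]_n) : psd A -> psd B -> psd (A + B).
Proof. by move=> pA pB v; rewrite mulmxDr mulmxDl [X in 0 <= X]mxE addr_ge0. Qed.

Lemma psdZ n (c : C) (A : 'M[C]_n) : 0 <= c -> psd A -> psd (c *: A).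
Proof. by move=> c0 pA v; rewrite -scalemxAr -scalemxAl [X in 0 <= X]mxE mulr_ge0. Qed.

Lemma psd_sum n I (r : seq I) (P : pred I) (F : I -> 'M[C]_n) :
  (forall k, P k -> psd (F k)) -> psd (\sum_(k <- r | P k) F k).
Proof.
move=> H; elim/big_rec: _ => [|k y Pk py]; first exact: psd0.
exact: psdD (H _ Pk) py.
Qed.

Lemma psd_proj n (v : 'cV[C]_n) : psd (proj v).
Proof.
move=> w; rewrite /proj !mulmxA -(mulmxA (adj w *m v)).
rewrite mxE big_ord1 -[adj w *m v](adjK) adj_mul adjK adjE mulrC.
exact: mul_conjC_ge0.
Qed.

Definition gch n (q : 'I_3 -> R) (U : 'I_3 -> 'M[C]_n) (rho : 'M[C]_n) : 'M[C]_n :=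
  \sum_(k < 3) (q k)%:C%C *: (U k *m rho *m adj (U k)).

Lemma psd_gch n q (U : 'I_3 -> 'M[C]_n) rho :
  (forall k, 0 <= q k) -> psd rho -> psd (gch q U rho).
Proof.
move=> q0 pr; apply: psd_sum => k _; apply: psdZ; first by rewrite ler0c.
exact: psd_conj.
Qed.

Lemma tr_conjU n (K M : 'M[C]_n) : adj K *m K = 1%:M -> \tr (K *m M *m adj K) = \tr M.
Proof. by move=> uK; rewrite mxtrace_mulC mulmxA uK mul1mx. Qed.

Lemma tr_gch n q (U : 'I_3 -> 'M[C]_n) rho :
  (forall k, adj (U k) *m U k = 1%:M) -> \sum_(k < 3) q k = 1 ->
  \tr (gch q U rho) = \tr rho.
Proof.
move=> uU sq; rewrite /gch raddf_sum /=.
under eq_bigr => k _ do rewrite mxtraceZ tr_conjU //.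
by rewrite -mulr_suml -rmorph_sum /= sq rmorph1 mul1r.
Qed.

Lemma sq_entry_le n (T : 'M[C]_n) i : psd T -> T i i * T i i <= (T *m T) i i.
Proof.
move=> pT; rewrite mxE (bigD1 i) //= lerDl sumr_ge0 // => j _.
by rewrite (psd_herm pT i j) mul_conjC_ge0.
Qed.

Lemma UB n (A B S : 'M[C]_n) : psd A -> psd B -> psd S ->
  S *m S = adj (A - B) *m (A - B) -> \tr S <= \tr A + \tr B.
Proof.
move=> pA pB pS hS.
set X := A - B.
have hX : adj X = X by rewrite adjB !psd_hermE.
have nX : X \is normalmx by apply/normalmxP; rewrite -adj_tc hX.
have uP : spectralmx X \is unitarymx := spectral_unitarymx X.
have hXd := orthomx_spectralP nX.
rewrite invmx_unitary // in hXd.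
move: hXd; set P := spectralmx X; set d := spectral_diag X; set D := diag_mx d; rewrite -adj_tc => hXd.
have PPa : P *m adj P = 1%:M by rewrite adj_tc; apply/unitarymxP.
have PaP : adj P *m P = 1%:M.
  by rewrite adj_tc -invmx_unitary // mulVmx // unitarymx_unit.
have hD : P *m X *m adj P = D.
  by rewrite hXd !mulmxA PPa mul1mx -mulmxA PPa mulmx1.
set T := P *m S *m adj P; set A' := P *m A *m adj P; set B' := P *m B *m adj P.
have pT : psd T by apply: psd_conj.
have pA' : psd A' by apply: psd_conj.
have pB' : psd B' by apply: psd_conj.
have TT : T *m T = D *m D.
  rewrite -hD /T !mulmxA -[P *m S *m adj P *m P]mulmxA PaP mulmx1 -[P *m S *m S]mulmxA hS hX.
  by rewrite !mulmxA -[P *m X *m adj P *m P]mulmxA PaP mulmx1.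
have DAB : D = A' - B' by rewrite -hD /X mulmxBr mulmxBl.
have key i : T i i <= A' i i + B' i i.
  have t0 := psd_diag i pT; have a0 := psd_diag i pA'; have b0 := psd_diag i pB'.
  rewrite -(ler_sqr (x := T i i)) ?nnegrE ?addr_ge0 //.
  apply: (le_trans (y := (D *m D) i i)).
    by rewrite expr2 -TT sq_entry_le.
  have Dii : D i i = d 0 i by rewrite /D mxE eqxx mulr1n.
  have DAii : D i i = A' i i - B' i i.
    by rewrite DAB [(A' - B') i i]mxE [(- B') i i]mxE.
  rewrite mul_diag_mx mxE -Dii DAii -subr_ge0.
  have -> : (A' i i + B' i i) ^+ 2 - (A' i i - B' i i) * (A' i i - B' i i) =
     4%:R * (A' i i * B' i i) by ring.
  by rewrite mulr_ge0 ?mulr_ge0.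
rewrite -(tr_conjU S PaP) -(tr_conjU A PaP) -(tr_conjU B PaP) -/T -/A' -/B'.
rewrite /mxtrace -big_split /=; apply: ler_sum => i _; exact: key.
Qed.

Definition orthonormal n (I : finType) (f : I -> 'cV[C]_n) :=
  forall a b, adj (f a) *m f b = (a == b)%:R%:M.

Lemma ortho_mul n (I : finType) (f : I -> 'cV[C]_n) (al be : I -> C) :
  orthonormal f ->
  (\sum_a al a *: proj (f a)) *m (\sum_b be b *: proj (f b)) =
  \sum_a (al a * be a) *: proj (f a).
Proof.
move=> hf; rewrite mulmx_suml; apply: eq_bigr => a _.
rewrite mulmx_sumr (bigD1 a) //= big1 ?addr0.
  by rewrite -scalemxAl -scalemxAr scalerA /proj mulmxA -(mulmxA (f a)) hf eqxx mulmx1.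
move=> b nba; rewrite -scalemxAl -scalemxAr /proj mulmxA -(mulmxA (f a)) hf.
by rewrite eq_sym (negbTE nba) mul_mx_scalar scale0r mul0mx !scaler0.
Qed.

Lemma LB n (I : finType) (f : I -> 'cV[C]_n) (lam : I -> C) (S : 'M[C]_n) :
  orthonormal f -> psd S -> (forall a, S *m f a = lam a *: f a) ->
  \sum_a lam a <= \tr S.
Proof.
move=> hf pS hS.
set P := \sum_a 1 *: proj (f a).
have PP : P *m P = P.
  by rewrite /P ortho_mul //; apply: eq_bigr => a _; rewrite mulr1.
have hP : adj P = P.
  rewrite /P adj_sum; apply: eq_bigr => a _.
  by rewrite adjZ rmorph1 /proj adj_mul adjK.
set Q := 1%:M - P.
have QQ : Q *m Q = Q by rewrite /Q mulmxBl mul1mx mulmxBr mulmx1 PP subrr subr0.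
have hQ : adj Q = Q by rewrite /Q adjB adj1 hP.
have -> : \tr S = \tr (S *m P) + \tr (S *m Q).
  by rewrite -mxtraceD -mulmxDr /Q addrC subrK mulmx1.
have -> : \tr (S *m P) = \sum_a lam a.
  rewrite /P mulmx_sumr raddf_sum /=; apply: eq_bigr => a _.
  rewrite scale1r /proj mulmxA hS -scalemxAl mxtraceZ mxtrace_mulC hf eqxx mxtrace1 mulr1.
  done.
rewrite lerDl.
have -> : \tr (S *m Q) = \tr (Q *m S *m adj Q).
  by rewrite hQ [RHS]mxtrace_mulC mulmxA QQ mxtrace_mulC.
have pQ := psd_conj Q pS.
by rewrite /mxtrace sumr_ge0 // => i _; apply: psd_diag.
Qed.

Lemma norm0_vec n (g : 'cV[C]_n) : (adj g *m g) 0 0 = 0 -> g = 0.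
Proof.
rewrite mxE => /eqP; rewrite psumr_eq0 => [/allP hg|i _]; last first.
  by rewrite adjE mulrC mul_conjC_ge0.
apply/matrixP=> i j; rewrite [j]ord1 mxE.
have := hg i (mem_index_enum i); rewrite adjE mulf_eq0 conjC_eq0.
by case/orP => /eqP.
Qed.

Lemma entD m n (A B : 'M[C]_(m,n)) i j : (A + B) i j = A i j + B i j.
Proof. by rewrite mxE. Qed.
Lemma entZ m n c (A : 'M[C]_(m,n)) i j : (c *: A) i j = c * A i j.
Proof. by rewrite mxE. Qed.
Lemma ent0 m n i j : (0 : 'M[C]_(m,n)) i j = 0.
Proof. by rewrite mxE. Qed.

Lemma eig_sqrt n (S : 'M[C]_n) (v : 'cV[C]_n) (c : C) : psd S -> 0 < c ->
  S *m S *m v = (c * c) *: v -> S *m v = c *: v.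
Proof.
move=> pS c0 hv.
suff : S *m v - c *: v = 0 by move/eqP; rewrite subr_eq0 => /eqP.
have hg : (S + c%:M) *m (S *m v - c *: v) = 0.
  rewrite mulmxDl !mulmxBr !mul_scalar_mx -!scalemxAr mulmxA hv scalerA.
  by rewrite addrA subrK subrr.
move: (S *m v - c *: v) hg => g hg.
have : (adj g *m S *m g) 0 0 + c * (adj g *m g) 0 0 = 0.
  have := congr1 (fun M => (adj g *m M) 0 0) hg.
  rewrite /= mulmx0 mulmxA mulmxDr mulmxDl mul_mx_scalar -scalemxAl.
  by rewrite ent0 entD entZ.
move=> /eqP; rewrite paddr_eq0 ?mulr_ge0 ?pS ?(ltW c0) //; last first.
  by rewrite mxE sumr_ge0 // => i _; rewrite adjE mulrC mul_conjC_ge0.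
case/andP=> _; rewrite mulf_eq0 (gt_eqF c0) /= => /eqP.
exact: norm0_vec.
Qed.
End Gen.

Section T.
Variable R : realType.
Local Notation C := R[i].

Lemma sum3 (V : nmodType) (F : 'I_3 -> V) : \sum_(i < 3) F i = F k0 + F k1 + F k2.
Proof.
rewrite !big_ord_recl big_ord0 addr0 addrA.
by congr (F _ + F _ + F _); apply: val_inj.
Qed.

Lemma sum9 (V : nmodType) (F : 'I_(3*3) -> V) :
  \sum_k F k = \sum_(i < 3) \sum_(j < 3) F (mxtens_index (i, j)).
Proof.
rewrite pair_big /= (reindex (@mxtens_index 3 3)) /=.
  by apply: eq_bigr => -[i j].
exists (@mxtens_unindex 3 3) => x _; [exact: mxtens_indexK | exact: mxtens_unindexK].
Qed.

Definition pf (i j : 'I_3) : C :=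
  match val i, val j with
  | 0, 1 => (1 + 'i) / 2%:R
  | 1, 2 => 1 / 2%:R
  | 2, 0 => 1 / 2%:R
  | _, _ => 0
  end.

Definition psi0 : 'cV[C]_(3*3) :=
  \col_k pf (@mxtens_unindex 3 3 k).1 (@mxtens_unindex 3 3 k).2.

Lemma psi0E i j : psi0 (mxtens_index (i, j)) 0 = pf i j.
Proof. by rewrite mxE mxtens_indexK. Qed.

Lemma conj_half : (1 / 2%:R : C)^* = 1 / 2%:R.
Proof. by rewrite rmorphM rmorph1 fmorphV rmorph_nat. Qed.

Lemma conj_c : ((1 + 'i) / 2%:R : C)^* * ((1 + 'i) / 2%:R) = 1 / 2%:R.
Proof.
rewrite rmorphM rmorphD rmorph1 fmorphV rmorph_nat /= (@conjCi C).
have hi : ('i : C) * 'i = -1 by rewrite -expr2 sqrCi.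
have h2 : (2%:R : C) != 0 by rewrite pnatr_eq0.
apply/eqP; rewrite -subr_eq0; apply/eqP.
transitivity (- ('i * 'i + 1) / 4%:R : C).
  by field.
by rewrite -expr2 sqrCi addNr oppr0 mul0r.
Qed.

Lemma weight (M : 'M[C]_3) :
  (adj psi0 *m (M *t (1%:M : 'M[C]_3)) *m psi0) 0 0 =
  1 / 2%:R * M k0 k0 + 1 / 4%:R * M k1 k1 + 1 / 4%:R * M k2 k2.
Proof.
rewrite mxE sum9.
under eq_bigr => i _ do under eq_bigr => j _ do rewrite mxE sum9 psi0E.
under eq_bigr => i _ do under eq_bigr => j _ do
  under eq_bigr => i' _ do under eq_bigr => j' _ do rewrite adjE psi0E tensmxE.
rewrite !sum3 /pf /= !mxE /= conj_half conjC0.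
set a := ((1 + 'i) / 2%:R)^*; set b := (1 + 'i) / 2%:R.
have key : a * b = 1 / 2%:R by apply: conj_c.
apply/eqP; rewrite -subr_eq0; apply/eqP.
transitivity ((a * b - 1 / 2%:R) * M k0 k0); first by field.
by rewrite key subrr mul0r.
Qed.

Definition Kop (x : 'I_2 * 'I_3) : 'M[C]_3 :=
  if val x.1 == 0%N then Lop R x.2 else Sop R x.2.

Definition shiftK (x : 'I_2 * 'I_3) : nat :=
  match val x.1, val x.2 with 0, 1 => 1 | 0, _ => 0 | _, 1 => 1 | _, _ => 2 end.
Definition negK (x : 'I_2 * 'I_3) : bool :=
  match val x.1, val x.2 with 0, 2 => true | 1, 1 => true | 1, 2 => true | _, _ => false end.
Definition ent (x : 'I_2 * 'I_3) (i j : 'I_3) : int :=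
  (if negK x && (val j == 0%N) then -1 else 1) * ((val i == (val j + shiftK x) %% 3)%N : int).

Lemma KopE x i j : Kop x i j = (ent x i j)%:~R.
Proof.
case: x => [[[|[|//]] ?] [[|[|[|//]]] ?]];
case: i => [[|[|[|//]]] ?]; case: j => [[|[|[|//]]] ?];
by rewrite /Kop /Lop /Sop /ketbra /ent /= !mxE /= intrM ?oppr0 ?addr0 ?add0r ?mulr1 ?mulr0 ?mul1r ?mulN1r. Qed.

Definition gK (x y : 'I_2 * 'I_3) : int :=
  2 * (\sum_(j < 3) ent x j k0 * ent y j k0) + \sum_(j < 3) ent x j k1 * ent y j k1
  + \sum_(j < 3) ent x j k2 * ent y j k2.

Lemma gKE x y : gK x y = 4 * (x == y)%:Z.
Proof.
case: x => [[[|[|//]] ?] [[|[|[|//]]] ?]];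
case: y => [[[|[|//]] ?] [[|[|[|//]]] ?]];
by rewrite /gK !sum3; reflexivity.
Qed.

Lemma conjz (z : int) : ((z%:~R : C)^*) = z%:~R.
Proof. exact: rmorph_int. Qed.

Lemma adjKK x y i : (adj (Kop x) *m Kop y) i i = (\sum_(j < 3) ent x j i * ent y j i)%:~R.
Proof.
rewrite mxE rmorph_sum; apply: eq_bigr => j _.
by rewrite adjE !KopE /= conjz -intrM; reflexivity.
Qed.

Definition wt (N : 'M[C]_3) := 1 / 2%:R * N k0 k0 + 1 / 4%:R * N k1 k1 + 1 / 4%:R * N k2 k2.

Lemma Kortho x y : wt (adj (Kop x) *m Kop y) = (x == y)%:R.
Proof.
have : (gK x y)%:~R = 4%:R * (x == y)%:R :> C by rewrite gKE intrM.
rewrite /gK /wt !adjKK !rmorphD rmorphM /= => h.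
apply: (@mulfI _ 4%:R); first by rewrite pnatr_eq0.
rewrite -h (_ : (2%:~R : C) = 2%:R) //; by field.
Qed.

Lemma gUE x (i j : 'I_3) : \sum_(m < 3) ent x m i * ent x m j = (i == j)%:Z.
Proof.
case: x => [[[|[|//]] ?] [[|[|[|//]]] ?]];
case: i => [[|[|[|//]]] ?]; case: j => [[|[|[|//]]] ?];
by rewrite sum3; reflexivity.
Qed.

Lemma Kunit x : adj (Kop x) *m Kop x = 1%:M.
Proof.
apply/matrixP=> i j; rewrite mxE.
rewrite (eq_bigr (fun m => (ent x m i * ent x m j)%:~R)); last first.
  by move=> m _; rewrite adjE !KopE /= conjz -intrM; reflexivity.
by rewrite -rmorph_sum gUE mxE; case: (i == j).
Qed.

Lemma LopK k : Lop R k = Kop (Ordinal (isT : (0 < 2)%N), k).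
Proof. by []. Qed.
Lemma SopK k : Sop R k = Kop (Ordinal (isT : (1 < 2)%N), k).
Proof. by []. Qed.

Lemma tensU n (K : 'M[C]_n) m : adj K *m K = 1%:M ->
  adj (K *t (1%:M : 'M[C]_m)) *m (K *t 1%:M) = 1%:M.
Proof. by move=> uK; rewrite adj_tens adj1 tensmx_mul uK mulmx1 tens11. Qed.

Definition fv (x : 'I_2 * 'I_3) : 'cV[C]_(3*3) := (Kop x *t (1%:M : 'M[C]_3)) *m psi0.

Lemma fv_ortho : orthonormal fv.
Proof.
move=> x y; rewrite /fv adj_mul adj_tens adj1 !mulmxA.
rewrite -(mulmxA (adj psi0)) tensmx_mul mulmx1.
rewrite [LHS]mx11_scalar weight; congr (_%:M).
by rewrite -/(wt _) Kortho.
Qed.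

Lemma unit_psi0 : unit_vec psi0.
Proof.
have h : adj psi0 *m psi0 = adj psi0 *m ((1%:M : 'M[C]_3) *t (1%:M : 'M[C]_3)) *m psi0.
  by rewrite tens11 mulmx1.
rewrite /unit_vec h weight !mxE /=.
by field.
Qed.

Lemma c_neq0 : ((1 + 'i) / 2%:R : C) != 0.
Proof.
apply/eqP => h; have := conj_c; rewrite h mulr0 => /eqP.
by rewrite eq_sym mul1r invr_eq0 pnatr_eq0.
Qed.

Lemma ent_psi0 : entangled_pure psi0.
Proof.
move=> [a [b hab]].
have E i j : pf i j = a i 0 * b j 0.
  rewrite -psi0E hab mxE mxtens_indexK /=.
  by congr (a _ _ * b _ _); apply: val_inj; rewrite /= ?ord1.
have e1 := E k0 k1; have e2 := E k1 k2; have e3 := E k0 k2; have e4 := E k1 k1.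
rewrite /pf /= in e1 e2 e3 e4.
have : ((1 + 'i) / 2%:R) * (1 / 2%:R) = 0 :> C.
  rewrite e1 e2.
  have -> : a k0 0 * b k1 0 * (a k1 0 * b k2 0) = (a k0 0 * b k2 0) * (a k1 0 * b k1 0) by ring.
  by rewrite -e3 mul0r.
move/eqP; rewrite mulf_eq0 (negbTE c_neq0) /= mul1r invr_eq0 pnatr_eq0.
done.
Qed.

Lemma notmax_psi0 : ~ max_entangled psi0.
Proof.
move=> [h _]; have := congr1 (fun M : 'M[C]_3 => M k0 k0) h.
rewrite /= /ptrB !mxE sum3 /proj.
rewrite !mxE !big_ord1 !adjE !psi0E /pf /= !mul0r add0r addr0 mulrC conj_c mulr1 mul1r.
by move=> /(congr1 GRing.inv); rewrite !invrK => /eqP; rewrite eqr_nat.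
Qed.

Definition o0 : 'I_2 := Ordinal (isT : (0 < 2)%N).
Definition o1 : 'I_2 := Ordinal (isT : (1 < 2)%N).

Lemma sum23 (V : nmodType) (F : 'I_2 * 'I_3 -> V) :
  \sum_x F x = \sum_(k < 3) F (o0, k) + \sum_(k < 3) F (o1, k).
Proof.
transitivity (\sum_(i < 2) \sum_(k < 3) F (i, k)).
  by rewrite pair_big; apply: eq_big => // -[].
rewrite (big_ord_recl 1) (big_ord_recl 0) big_ord0 addr0.
by congr (_ + _); apply: eq_bigr => k _; congr (F (_, _)); apply: val_inj.
Qed.

Lemma ortho_apply n (I : finType) (f : I -> 'cV[C]_n) (g : I -> C) b :
  orthonormal f -> (\sum_a g a *: proj (f a)) *m f b = g b *: f b.
Proof.
move=> hf; rewrite mulmx_suml (bigD1 b) //= big1 ?addr0.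
  by rewrite -scalemxAl /proj -mulmxA hf eqxx mulmx1.
move=> a nab; rewrite -scalemxAl /proj -mulmxA hf (negbTE nab).
by rewrite mul_mx_scalar scale0r scaler0.
Qed.

Lemma conj_realC (x : R) : (x%:C%C : C)^* = x%:C%C.
Proof. by apply/CrealP/complex_realP; exists x. Qed.

Definition sg (x : 'I_2 * 'I_3) : C := if val x.1 == 0%N then 1 else -1.

Lemma chanA_psi (q : 'I_3 -> R) (K : 'I_3 -> 'M[C]_3) :
  chanA q K (proj psi0) = \sum_(k < 3) (q k)%:C%C *: proj ((K k *t (1%:M : 'M[C]_3)) *m psi0).
Proof.
apply: eq_bigr => k _; congr (_ *: _).
by rewrite /proj adj_mul !mulmxA.
Qed.

Lemma Delta (q : 'I_3 -> R) :
  chanA q (Lop R) (proj psi0) - chanA q (Sop R) (proj psi0) =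
  \sum_x (sg x * (q x.2)%:C%C) *: proj (fv x).
Proof.
rewrite !chanA_psi sum23 /sg /= -sumrN; congr (_ + _); apply: eq_bigr => k _.
  by rewrite mul1r.
by rewrite mulN1r scaleNr.
Qed.

Lemma trnorm_psi (q : 'I_3 -> R) : (forall k, 0 < q k) -> \sum_(k < 3) q k = 1 ->
  2%:R <= trnorm (chanA q (Lop R) (proj psi0) - chanA q (Sop R) (proj psi0)).
Proof.
move=> q0 sq; rewrite Delta.
set al := fun x => sg x * (q x.2)%:C%C.
set be := fun x : 'I_2 * 'I_3 => (q x.2)%:C%C.
set D := \sum_x al x *: proj (fv x).
have hD : adj D = D.
  rewrite /D adj_sum; apply: eq_bigr => x _.
  rewrite adjZ /proj adj_mul adjK /al rmorphM /= conj_realC; congr (_ * _ *: _).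
  by rewrite /sg; case: eqP => _; rewrite ?rmorphN rmorph1.
have DD : adj D *m D = \sum_x (be x * be x) *: proj (fv x).
  rewrite hD /D ortho_mul; last exact: fv_ortho.
  apply: eq_bigr => x _; congr (_ *: _).
  by rewrite /al /be /sg; case: eqP => _; rewrite ?mul1r // mulN1r mulrNN.
set S0 := \sum_x be x *: proj (fv x).
have pS0 : psd S0.
  apply: psd_sum => x _; apply: psdZ; last exact: psd_proj.
  by rewrite /be ler0c ltW.
have S0S0 : S0 *m S0 = adj D *m D.
  by rewrite DD /S0 ortho_mul; [reflexivity | exact: fv_ortho].
rewrite /trnorm; case: xgetP => [S _ [pS hS] | hN]; last first.
  by exfalso; apply: (hN S0).
have eig x : S *m fv x = be x *: fv x.
  apply: eig_sqrt => //; first by rewrite /be -[0]/((0:R)%:C%C) ltcR.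
  transitivity (adj D *m D *m fv x); first by congr (_ *m _).
  rewrite DD ortho_apply //; exact: fv_ortho.
apply: le_trans (LB fv_ortho pS eig).
rewrite sum23 /be /= -!rmorph_sum sq -rmorphD /=.
by rewrite rmorphD rmorph1.
Qed.

Lemma trnorm_le n (U1 U2 : 'I_3 -> 'M[C]_n) (q : 'I_3 -> R) rho :
  (forall k, 0 <= q k) -> \sum_(k < 3) q k = 1 ->
  (forall k, adj (U1 k) *m U1 k = 1%:M) -> (forall k, adj (U2 k) *m U2 k = 1%:M) ->
  density rho -> trnorm (gch q U1 rho - gch q U2 rho) <= 2%:R.
Proof.
move=> q0 sq u1 u2 [pr tr1]; rewrite /trnorm; case: xgetP => [S _ [pS hS] | _].
  apply: le_trans (UB (psd_gch U1 q0 pr) (psd_gch U2 q0 pr) pS hS) _.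
  by rewrite !tr_gch // tr1.
by rewrite mxtrace0 ler0n.
Qed.

Lemma psucc_le (t : C) : t <= 2%:R -> 1 / 2%:R + 1 / 4%:R * t <= 1.
Proof.
move=> ht; rewrite -subr_ge0.
have -> : 1 - (1 / 2%:R + 1 / 4%:R * t) = (2%:R - t) / 4%:R by field.
by rewrite divr_ge0 ?subr_ge0 ?ler0n.
Qed.

Lemma psucc_ge (t : C) : 2%:R <= t -> 1 <= 1 / 2%:R + 1 / 4%:R * t.
Proof.
move=> ht; rewrite -subr_ge0.
have -> : 1 / 2%:R + 1 / 4%:R * t - 1 = (t - 2%:R) / 4%:R by field.
by rewrite divr_ge0 ?subr_ge0 ?ler0n.
Qed.
End T.

Unset Implicit Arguments.

Theorem theorem8 (R : realType) (q1 q2 q3 : R) :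
  0 < q1 < 1 -> 0 < q2 < 1 -> 0 < q3 < 1 -> q1 + q2 + q3 = 1 ->
  exists psi : 'cV[R[i]]_(3 * 3),
    [/\ unit_vec psi, entangled_pure psi, ~ max_entangled psi,
        (forall rho : 'M[R[i]]_3, density rho ->
           psucc1 (qvec q1 q2 q3) (@Lop R) (@Sop R) rho
           <= psucc2 (qvec q1 q2 q3) (@Lop R) (@Sop R) (proj psi))
      & (forall (d : nat) (rho : 'M[R[i]]_(3 * d)), density rho ->
           psucc2 (qvec q1 q2 q3) (@Lop R) (@Sop R) rho
           <= psucc2 (qvec q1 q2 q3) (@Lop R) (@Sop R) (proj psi))].
Proof.
move=> /andP[h1 _] /andP[h2 _] /andP[h3 _] hs.
set q := qvec q1 q2 q3.
have qp k : 0 < q k by rewrite /q /qvec; case: k => [[|[|[|//]]] ?].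
have q0 k : 0 <= q k by apply: ltW.
have sq : \sum_(k < 3) q k = 1 by rewrite sum3.
have uL k : adj (Lop R k) *m Lop R k = 1%:M by rewrite LopK Kunit.
have uS k : adj (Sop R k) *m Sop R k = 1%:M by rewrite SopK Kunit.
have top : 1 <= psucc2 q (@Lop R) (@Sop R) (proj (psi0 R)).
  by apply: psucc_ge; apply: trnorm_psi.
exists (psi0 R); split.
- exact: unit_psi0.
- exact: ent_psi0.
- exact: notmax_psi0.
- move=> rho dr; apply: le_trans top.
  exact: (psucc_le (trnorm_le (U1 := Lop R) (U2 := Sop R) q0 sq uL uS dr)).
- move=> d rho dr; apply: le_trans top.
  exact: (psucc_le (trnorm_le (U1 := fun k => Lop R k *t (1%:M : 'M[R[i]]_d))
     (U2 := fun k => Sop R k *t (1%:M : 'M[R[i]]_d)) q0 sq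
     (fun k => tensU d (uL k)) (fun k => tensU d (uS k)) dr)).
Qed.
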